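(* Let $\bar Q$ be a locally gentle bound quiver, let $F$ be a finite face of the non-kissing complex $\mathcal K_{nk}(\bar Q)$ and let $\alpha$ be an arrow of $Q^{\mathrm{bl}}$. Then the set $F_\alpha$ of walks of $F$ marked at an occurrence of $\alpha^{\pm1}$ is either empty or has a maximal element for the countercurrent order $\prec_\alpha$.
   Context: Locally gentle bound quiver $\bar Q=(Q,I)$: $Q$ finite, $I$ an ideal of $kQ$ generated by paths of length two ($kQ/I$ possibly infinite-dimensional), each vertex with at most two incoming and two outgoing arrows, and for each arrow $\beta$ at most one $\alpha$ with $t(\alpha)=s(\beta)$, $\alpha\beta\notin I$, at most one with $\alpha\beta\in I$, and symmetrically on the outgoing side. $\bar Q^{\mathrm{bl}}$ adds degree-one blossom vertices and arrows so each vertex of $Q_0$ has two incoming and two outgoing arrows, relations completed to stay locally gentle. A walk is a maximal (finite, or eventually cyclic ${}^\infty(c_1^{\varepsilon_1})\sigma(c_2^{\varepsilon_2})^\infty$ with $c_i$ oriented cycles, possibly trivial) string of $\bar Q^{\mathrm{bl}}$, a string being a composable reduced word in arrows and formal inverses with no factor $\pi^{\pm1}$ for a path $\pi\in I$; $\omega\equiv\omega^{-1}$. For $\omega=\prod_{i<\ell<j}\alpha_\ell^{\varepsilon_\ell}$, a substring $\prod_{i'<\ell<j'}\alpha_\ell^{\varepsilon_\ell}$ ($i\le i'<j'\le j$, strict at finite ends, remembered with its position) is on top if ($i'=-\infty$ or $\varepsilon_{i'}=-1$) and ($j'=\infty$ or $\varepsilon_{j'}=1$), at the bottom if ($i'=-\infty$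 or $\varepsilon_{i'}=1$) and ($j'=\infty$ or $\varepsilon_{j'}=-1$). $\omega$ kisses $\omega'$ if a finite string is a top substring of $\omega$ and a bottom substring of $\omega'$. Faces of $\mathcal K_{nk}(\bar Q)$ are sets of pairwise non-kissing walks (none kissing itself). A marked walk is a walk together with a marked occurrence of an arrow $\alpha^{\pm1}$ in it; for an infinite straight walk ${}^\infty c^\infty$ all markings at occurrences of $\alpha^{\pm1}$ are considered equal. Countercurrent order: for two distinct non-kissing walks $\mu_\star,\nu_\star$ marked at occurrences of $\alpha^{\pm1}$, let $\sigma$ be their maximal common substring containing the marked occurrence; they split at an endpoint of $\sigma$, and $\mu_\star\prec_\alpha\nu_\star$ if $\mu_\star$ enters and/or exits $\sigma$ in the direction pointed by $\alpha$ while $\nu_\star$ enters and/or exits $\sigma$ in the direction opposite to $\alpha$. *)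

(* Defs.v *)
From Stdlib Require Import ZArith List.
From HB Require Import structures.
From mathcomp Require Import all_boot.

Set Implicit Arguments.
Unset Strict Implicit.
Unset Printing Implicit Defensive.

(* Bound quivers whose ideal is generated by paths of length two.          *)
(* [rel a b] means that the length-two path  a b  (first a, then b,        *)
(* tgt a = src b) belongs to I.                                            *)
Record bquiver := BQuiver {
  vert : finType;
  arr  : finType;
  src  : arr -> vert;
  tgt  : arr -> vert;
  rel  : arr -> arr -> bool
}.

Definition indeg (Q : bquiver) (v : vert Q) := #|[set a : arr Q | tgt a == v]|.
Definition outdeg (Q : bquiver) (v : vert Q) := #|[set a : arr Q | src a == v]|.

Definition locally_gentle (Q : bquiver) : Prop :=
  (forall a b : arr Q, rel a b -> tgt a = src b) /\
  (forall v : vert Q, indeg v <= 2 /\ outdeg v <= 2) /\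
  (forall b : arr Q,
      #|[set a : arr Q | (tgt a == src b) && ~~ rel a b]| <= 1 /\
      #|[set a : arr Q | (tgt a == src b) && rel a b]| <= 1) /\
  (forall a : arr Q,
      #|[set b : arr Q | (src b == tgt a) && ~~ rel a b]| <= 1 /\
      #|[set b : arr Q | (src b == tgt a) && rel a b]| <= 1).

Definition is_blossoming (Q Qbl : bquiver)
    (iv : vert Q -> vert Qbl) (ia : arr Q -> arr Qbl) : Prop :=
  injective iv /\ injective ia /\
  (forall a, src (ia a) = iv (src a)) /\
  (forall a, tgt (ia a) = iv (tgt a)) /\
  (forall a b, rel (ia a) (ia b) = rel a b) /\
  (forall v, indeg (iv v) = 2 /\ outdeg (iv v) = 2) /\
  (forall w : vert Qbl, (forall v, iv v <> w) -> indeg w + outdeg w = 1) /\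
  (forall b : arr Qbl, (forall a, ia a <> b) ->
      ((exists v, iv v = src b) /\ (forall v, iv v <> tgt b)) \/
      ((exists v, iv v = tgt b) /\ (forall v, iv v <> src b))) /\
  locally_gentle Qbl.

(* A letter is (a, true) for the arrow a and (a, false) for a^{-1}.        *)
Section Walks.
Variable B : bquiver.

Definition letter := (arr B * bool)%type.
Definition lsrc (x : letter) : vert B := if x.2 then src x.1 else tgt x.1.
Definition ltgt (x : letter) : vert B := if x.2 then tgt x.1 else src x.1.
Definition linv (x : letter) : letter := (x.1, ~~ x.2).

(* x followed by y is a (reduced, relation-free) string of length two *)
Definition compat (x y : letter) : bool :=
  [&& ltgt x == lsrc y,
      ~~ ((x.1 == y.1) && (x.2 != y.2)),
      ~~ [&& x.2, y.2 & rel x.1 y.1] &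
      ~~ [&& ~~ x.2, ~~ y.2 & rel y.1 x.1]].

(* A (possibly infinite) word  prod_{lo < l < hi} wl l, where None stands
   for -oo (for lo) or +oo (for hi). *)
Record walk := Walk { wlo : option Z; whi : option Z; wl : Z -> letter }.

Definition lbd (o : option Z) (l : Z) : Prop :=
  match o with None => True | Some i => (i < l)%Z end.
Definition ubd (o : option Z) (l : Z) : Prop :=
  match o with None => True | Some j => (l < j)%Z end.
Definition in_dom (w : walk) (l : Z) : Prop := lbd (wlo w) l /\ ubd (whi w) l.

(* w is a walk of B: a maximal string, each infinite end being eventually
   an oriented cycle c^{+-1} repeated forever. *)
Definition is_walk (w : walk) : Prop :=
  (exists l, in_dom w l) /\
  (forall l, in_dom w l -> in_dom w (l + 1) -> compat (wl w l) (wl w (l + 1))) /\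
  (forall j, whi w = Some j -> forall y, ~~ compat (wl w (j - 1)) y) /\
  (forall i, wlo w = Some i -> forall x, ~~ compat x (wl w (i + 1))) /\
  (whi w = None -> exists N p, in_dom w N /\ (0 < p)%Z /\
     forall l, (N <= l)%Z -> wl w (l + p) = wl w l /\ (wl w l).2 = (wl w N).2) /\
  (wlo w = None -> exists N p, in_dom w N /\ (0 < p)%Z /\
     forall l, (l <= N)%Z -> wl w (l - p) = wl w l /\ (wl w l).2 = (wl w N).2).

(* finite substrings prod_{i < l < j} (remembered with position) *)
Definition top_sub (w : walk) (i j : Z) : Prop :=
  in_dom w i /\ in_dom w j /\ (i < j)%Z /\ (wl w i).2 = false /\ (wl w j).2 = true.
Definition bot_sub (w : walk) (i j : Z) : Prop :=
  in_dom w i /\ in_dom w j /\ (i < j)%Z /\ (wl w i).2 = true /\ (wl w j).2 = false.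

Definition sstr (w : walk) (i j : Z) : vert B * seq letter :=
  (ltgt (wl w i),
   [seq wl w (i + 1 + Z.of_nat k) | k <- iota 0 (Z.to_nat (j - i - 1))]).
Definition rstr (w : walk) (i j : Z) : vert B * seq letter :=
  (lsrc (wl w j), rev (map linv (sstr w i j).2)).

Definition kisses (w w' : walk) : Prop :=
  exists i j k m, top_sub w i j /\ bot_sub w' k m /\
    (sstr w i j = sstr w' k m \/ sstr w i j = rstr w' k m).

Definition is_face (F : seq walk) : Prop :=
  (forall w, List.In w F -> is_walk w) /\
  (forall w w', List.In w F -> List.In w' F -> ~ kisses w w').

(* Marked walks.  A walk marked at an occurrence (position p) of a^{+-1} is
   normalised by reading it so that the marked letter is the direct letter
   a, placed at position 0. *)
Definition center (w : walk) (p : Z) : walk :=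
  if (wl w p).2 then
    Walk (omap (fun i => i - p)%Z (wlo w)) (omap (fun j => j - p)%Z (whi w))
         (fun l => wl w (p + l)%Z)
  else
    Walk (omap (fun j => p - j)%Z (whi w)) (omap (fun i => p - i)%Z (wlo w))
         (fun l => linv (wl w (p - l)%Z)).

Definition marked_in (F : seq walk) (a : arr B) (m : walk) : Prop :=
  exists w p, List.In w F /\ in_dom w p /\ (wl w p).1 = a /\ m = center w p.

(* equality of marked walks; markings of an infinite straight walk
   (bi-infinite, all letters in the same direction) are all identified *)
Definition meq (mu nu : walk) : Prop :=
  (wlo mu = wlo nu /\ whi mu = whi nu /\
     forall l, in_dom mu l -> wl mu l = wl nu l) \/
  (wlo mu = None /\ whi mu = None /\ wlo nu = None /\ whi nu = None /\
   (forall l, (wl mu l).2 = true) /\ (forall l, (wl nu l).2 = true) /\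
   exists k, forall l, wl mu l = wl nu (l + k)%Z).

Definition agree (mu nu : walk) (l : Z) : Prop :=
  in_dom mu l /\ in_dom nu l /\ wl mu l = wl nu l.

(* the maximal common substring sigma containing position 0 ends just before
   position R > 0, where the two walks continue with different letters *)
Definition split_right (mu nu : walk) (R : Z) : Prop :=
  (0 < R)%Z /\ (forall k, (0 <= k < R)%Z -> agree mu nu k) /\
  in_dom mu R /\ in_dom nu R /\ wl mu R <> wl nu R.
Definition split_left (mu nu : walk) (L : Z) : Prop :=
  (L < 0)%Z /\ (forall k, (L < k <= 0)%Z -> agree mu nu k) /\
  in_dom mu L /\ in_dom nu L /\ wl mu L <> wl nu L.

(* countercurrent order: with sigma read so that a points forward, mu enters
   and/or exits sigma along a direct letter (direction pointed by a) while
   nu does so along an inverse letter (direction opposite to a). *)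
Definition countercurrent (mu nu : walk) : Prop :=
  ~ meq mu nu /\
  ((exists R, split_right mu nu R) \/ (exists L, split_left mu nu L)) /\
  (forall R, split_right mu nu R -> (wl mu R).2 = true /\ (wl nu R).2 = false) /\
  (forall L, split_left mu nu L -> (wl mu L).2 = true /\ (wl nu L).2 = false).

End Walks.

(* Main.v *)
Require Import Defs.
From Stdlib Require Import ZArith List Lia Classical FunctionalExtensionality.
From HB Require Import structures.
From mathcomp Require Import all_boot.
Set Implicit Arguments.
Unset Strict Implicit.
Unset Printing Implicit Defensive.

Lemma card_le1_eq (T : finType) (A : {set T}) x y :
  #|A| <= 1 -> x \in A -> y \in A -> x = y.
Proof. by move=> /card_le1_eqP H hx hy; apply: H. Qed.

Lemma card_le2_3 (T : finType) (A : {set T}) x y z :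
  #|A| <= 2 -> x \in A -> y \in A -> z \in A -> x <> y -> x <> z -> y <> z -> False.
Proof.
move=> hA hx hy hz nxy nxz nyz.
have h1 : #|A :\ x| <= 1.
  by move: hA; rewrite (cardsD1 x A) hx.
apply: nyz; apply: (card_le1_eq h1); rewrite !inE; apply/andP; split=> //;
  apply/eqP => e; [apply: nxy | apply: nxz]; by rewrite e.
Qed.

Lemma linvK (B : bquiver) (x : letter B) : linv (linv x) = x.
Proof. by case: x => u b; rewrite /linv /= negbK. Qed.

Lemma compat_linv (B : bquiver) (x y : letter B) :
  compat x y = compat (linv y) (linv x).
Proof.
case: x => c bx; case: y => b bb.
rewrite /compat /linv /lsrc /ltgt /=.
by case: bx; case: bb => /=; rewrite ?(eq_sym c b) ?(eq_sym (tgt c)) ?(eq_sym (src c)) ?andbT ?andbF.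
Qed.

Lemma gentle_r (B : bquiver) : locally_gentle B ->
  forall x y y' : letter B, compat x y -> compat x y' -> y <> y' -> y.2 <> y'.2.
Proof.
move=> [_ [hdeg [hin hout]]] [c bx] [b bb] [b' bb'] h1 h2 hne /= e.
subst bb'.
have nbb : b <> b' by move=> e; apply: hne; rewrite e.
clear hne; move: h1 h2; rewrite /compat /lsrc /ltgt /=.
case: bb; case: bx;
  move=> /and4P[/eqP e1 n1 r1 q1] /and4P[/eqP e2 n2 r2 q2]; simpl in *.
- have H := proj1 (hout c).
  apply: nbb; apply: (card_le1_eq H); rewrite !inE; apply/andP; split=> //; apply/eqP; congruence.
- have := proj2 (hdeg (src c)); rewrite /outdeg => H.
  apply: (card_le2_3 H (x := c) (y := b) (z := b')); rewrite ?inE //; try (apply/eqP; congruence).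
  + by move=> e; move: n1; rewrite e eqxx.
  + by move=> e; move: n2; rewrite e eqxx.
- have := proj1 (hdeg (tgt c)); rewrite /indeg => H.
  apply: (card_le2_3 H (x := c) (y := b) (z := b')); rewrite ?inE //; try (apply/eqP; congruence).
  + by move=> e; move: n1; rewrite e eqxx.
  + by move=> e; move: n2; rewrite e eqxx.
- have H := proj1 (hin c).
  apply: nbb; apply: (card_le1_eq H); rewrite !inE; apply/andP; split=> //; apply/eqP; congruence.
Qed.

Local Open Scope Z_scope.

Definition SLe (L : Type) (f : Z -> L * bool) (D : Z -> Prop) (g : Z -> L * bool) (E : Z -> Prop) :=
  forall n, 0 < n -> (forall k, 0 <= k < n -> D k /\ E k /\ f k = g k) ->
    D n -> E n -> f n <> g n -> (f n).2 = true.

Definition sgood (L : Type) (nxt : L * bool -> L * bool -> Prop) (f : Z -> L * bool) (D : Z -> Prop) :=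
  D 0 /\ (forall k, 0 <= k -> D k -> D (k+1) -> nxt (f k) (f (k+1))) /\
  (forall k, 0 <= k -> D k -> ~ D (k+1) -> forall y, ~ nxt (f k) y).

Lemma SLe_refl L f D g E : (forall k, 0 <= k -> f k = g k) -> @SLe L f D g E.
Proof. move=> h n hn _ _ _ ne; exfalso; apply: ne; apply: h; lia. Qed.

Lemma SLe_trans L (nxt : L * bool -> L * bool -> Prop) f1 D1 f2 D2 f3 D3 :
  (forall x y y', nxt x y -> nxt x y' -> y <> y' -> y.2 <> y'.2) ->
  sgood nxt f1 D1 -> sgood nxt f2 D2 -> f2 0 = f1 0 ->
  SLe f1 D1 f2 D2 -> SLe f2 D2 f3 D3 -> SLe f1 D1 f3 D3.
Proof.
move=> gent [_ [st1 _]] [d20 [st2 mx2]] e0 h12 h23 n hn hag d1n d3n hne.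
have key : forall k, 0 <= k -> k <= n ->
   (forall k', 0 <= k' <= k -> D2 k' /\ f2 k' = f1 k') \/ (f1 n).2 = true.
  apply: natlike_ind.
  - move=> _; left=> k' hk'; have -> : k' = 0 by lia. by [].
  - move=> k hk IH hkn.
    case: (IH ltac:(lia)) => [ag|]; last by right.
    have d1k : D1 k by case: (hag k ltac:(lia)).
    have d1k1 : D1 (k+1).
      case: (Z.eq_dec (k+1) n) => [->|ne] //; by case: (hag (k+1) ltac:(lia)).
    have [d2k e2k] := ag k ltac:(lia).
    have nx1 := st1 k hk d1k d1k1.
    have d2k1 : D2 (k+1).
      apply: NNPP => nd; apply: (mx2 k hk d2k nd (f1 (k+1))); by rewrite e2k.
    case: (classic (f2 (k+1) = f1 (k+1))) => [e|ne].
      left=> k' hk'; case: (Z.eq_dec k' (Z.succ k)) => [->|ne'].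
        by rewrite -Z.add_1_r.
      by apply: ag; lia.
    have t1 : (f1 (k+1)).2 = true.
      apply: h12; [lia| |by []|by []|by auto].
      move=> k' hk'; have [h1 h2] := ag k' ltac:(lia); split; [by case: (hag k' ltac:(lia))|]; split=> //.
    have nx2 : nxt (f1 k) (f2 (k+1)) by rewrite -e2k; apply: st2.
    have df := gent _ _ _ nx1 nx2 (fun e => ne (esym e)).
    case: (Z.eq_dec (k+1) n) => [en|ne2].
      by right; rewrite -en.
    exfalso.
    have [_ [d3k1 e3k1]] := hag (k+1) ltac:(lia).
    have t2 : (f2 (k+1)).2 = true.
      apply: h23; [lia| |by []|by []|by rewrite -e3k1].
      move=> k' hk'; have [h1 h2] := ag k' ltac:(lia); have [_ [h3 h4]] := hag k' ltac:(lia).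
      by split=> //; split=> //; rewrite h2.
    by apply: df; rewrite t1 t2.
case: (key n ltac:(lia) ltac:(lia)) => [ag|] //.
have [d2n e2n] := ag n ltac:(lia).
rewrite -e2n; apply: h23 => //.
- move=> k hk; have [h1 h2] := ag k ltac:(lia); have [_ [h3 h4]] := hag k ltac:(lia).
  by split=> //; split=> //; rewrite h2.
- by rewrite e2n.
Qed.

Lemma SLe_tail L (f g : Z -> L * bool) D E P K :
  0 < P -> P <= K + 1 -> (forall k, 0 <= k -> g k = f (k + P)) ->
  (forall k, 0 <= k <= K -> (f k).2 = true) -> SLe f D g E.
Proof.
move=> hP hK hg hd n hn hag _ _ _.
suff H : forall m, 0 <= m -> 0 <= m -> m <= n -> (f m).2 = true by apply: H; lia.
apply: (Z_lt_induction (fun m => 0 <= m -> m <= n -> (f m).2 = true)) => m IH hm hmn.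
case: (Z_le_gt_dec m K) => [le|gt]; first by apply: hd; lia.
have -> : f m = f (m - P).
  have [_ [_ e]] := hag (m - P) ltac:(lia).
  by rewrite e hg; [f_equal; lia| lia].
apply: IH; lia.
Qed.

Definition wgood (B : bquiver) (c : walk B) :=
  (forall l, in_dom c l -> in_dom c (l+1) -> compat (wl c l) (wl c (l+1))) /\
  (forall l, in_dom c l -> ~ in_dom c (l+1) -> forall y, ~ compat (wl c l) y) /\
  (forall l, in_dom c l -> ~ in_dom c (l-1) -> forall x, ~ compat x (wl c l)).

Lemma in_dom_int (B : bquiver) (c : walk B) x y z :
  in_dom c x -> in_dom c z -> x <= y <= z -> in_dom c y.
Proof.
case: c => [lo hi f]; rewrite /in_dom /=.
by case: lo => [i|]; case: hi => [j|] /=; move=> [? ?] [? ?] ?; split; lia.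
Qed.

Lemma is_walk_wgood (B : bquiver) (w : walk B) : is_walk w -> wgood w.
Proof.
move=> [_ [h1 [h2 [h3 _]]]].
split; first by [].
split.
- move=> l [a1 a2] n y.
  destruct (whi w) as [j|] eqn:Ehi; last first.
    by exfalso; apply: n; split; [move: a1; case: (wlo w) => [i|] /=; lia| rewrite Ehi].
  have ej : j = l + 1.
    apply: NNPP => ne; apply: n; split.
      by move: a1; case: (wlo w) => [i|] /=; lia.
    by rewrite Ehi /=; move: a2 => /=; lia.
  have := h2 j erefl y; rewrite ej Z.add_simpl_r => /negP; by [].
- move=> l [a1 a2] n x.
  destruct (wlo w) as [i|] eqn:Elo; last first.
    by exfalso; apply: n; split; [rewrite Elo| move: a2; case: (whi w) => [j|] /=; lia].
  have ei : i = l - 1.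
    apply: NNPP => ne; apply: n; split.
      by rewrite Elo /=; move: a1 => /=; lia.
    by move: a2; case: (whi w) => [j|] /=; lia.
  have := h3 i erefl x; rewrite ei Z.sub_simpl_r => /negP; by [].
Qed.

Lemma wl_center (B : bquiver) (w : walk B) p l :
  wl (center w p) l = if (wl w p).2 then wl w (p + l) else linv (wl w (p - l)).
Proof. by rewrite /center; case: (wl w p).2. Qed.

Lemma in_dom_center (B : bquiver) (w : walk B) p l :
  in_dom (center w p) l <-> in_dom w (if (wl w p).2 then p + l else p - l).
Proof.
rewrite /center /in_dom; case: (wl w p).2 => /=;
case: (wlo w) => [i|]; case: (whi w) => [j|] /=; split; move=> [? ?]; split; lia.
Qed.

Lemma wgood_center (B : bquiver) (w : walk B) p : wgood w -> wgood (center w p).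
Proof.
move=> [h1 [h2 h3]].
split; [|split].
- move=> l; rewrite !in_dom_center !wl_center; case: (wl w p).2 => a b.
  + by rewrite Z.add_assoc in b *; apply: h1.
  + rewrite compat_linv !linvK.
    have e : p - l = p - (l+1) + 1 by lia.
    rewrite e in a *; by apply: h1.
- move=> l; rewrite !in_dom_center !wl_center; case: (wl w p).2 => a n y.
  + by apply: h2 => //; rewrite Z.add_assoc in n.
  + rewrite compat_linv linvK; apply: h3 => //.
    by rewrite (_ : p - l - 1 = p - (l+1)); last lia.
- move=> l; rewrite !in_dom_center !wl_center; case: (wl w p).2 => a n x.
  + by apply: h3 => //; rewrite (_ : p + l - 1 = p + (l-1)); last lia.
  + rewrite compat_linv linvK; apply: h2 => //.
    by rewrite (_ : p - l + 1 = p - (l-1)); last lia.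
Qed.

Definition Le (B : bquiver) (c c' : walk B) :=
  SLe (wl c) (in_dom c) (wl c') (in_dom c') /\
  SLe (fun k => wl c (-k)) (fun k => in_dom c (-k)) (fun k => wl c' (-k)) (fun k => in_dom c' (-k)).

Lemma Le_refl (B : bquiver) (c : walk B) : Le c c.
Proof. by split; apply: SLe_refl. Qed.

Lemma cc_Le (B : bquiver) (m x : walk B) : countercurrent m x -> Le m x.
Proof.
move=> [_ [_ [hr hl]]]; split.
- move=> n hn hag d1 d2 ne; apply: (proj1 (hr n _)).
  split=> //; split=> //; move=> k hk; have [? [? ?]] := hag k hk; by split.
- move=> n hn hag d1 d2 ne; apply: (proj1 (hl (-n) _)).
  split; first lia; split=> //; move=> k hk; have [u1 [u2 u3]] := hag (-k) ltac:(lia).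
  by rewrite Z.opp_involutive in u1 u2 u3; split.
Qed.

Lemma cc_notLe (B : bquiver) (m x : walk B) : countercurrent m x -> ~ Le x m.
Proof.
move=> [_ [[[R hR]|[L hL]] [hr hl]]] [h1 h2].
- have [t f] := hr R hR; move: hR => [hR0 [hag [d1 [d2 ne]]]].
  have := h1 R hR0; rewrite f; move=> H; suff : false = true by [].
  apply: H => //; last by auto.
  move=> k hk; have [? [? ?]] := hag k hk; by split.
- have [t f] := hl L hL; move: hL => [hL0 [hag [d1 [d2 ne]]]].
  have := h2 (-L) ltac:(lia); rewrite Z.opp_involutive f; move=> H; suff : false = true by [].
  apply: H => //; last by auto.
  move=> k hk; have [? [? ?]] := hag (-k) ltac:(lia); by split.
Qed.

Lemma gentle_l (B : bquiver) : locally_gentle B ->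
  forall x y y' : letter B, compat y x -> compat y' x -> y <> y' -> y.2 <> y'.2.
Proof.
move=> hg x y y' h1 h2 ne e.
rewrite compat_linv in h1; rewrite compat_linv in h2.
apply: (gentle_r hg h1 h2).
- by move=> e'; apply: ne; rewrite -(linvK y) -(linvK y') e'.
- by rewrite /linv /= e.
Qed.

Lemma MW_props (B : bquiver) (F : seq (walk B)) a x :
  is_face F -> marked_in F a x -> wgood x /\ in_dom x 0 /\ wl x 0 = (a, true).
Proof.
move=> [hw _] [w [p [hin [hd [ha ->]]]]].
split; first by apply: wgood_center; apply: is_walk_wgood; apply: hw.
split.
- by apply/in_dom_center; case: (wl w p).2; rewrite ?Z.add_0_r ?Z.sub_0_r.
- rewrite wl_center Z.add_0_r Z.sub_0_r.
  destruct (wl w p) as [u b]; simpl in ha; subst u.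
  by case: b.
Qed.

Lemma sgood_r (B : bquiver) (x : walk B) :
  wgood x -> in_dom x 0 -> sgood (fun u v => is_true (compat u v)) (wl x) (in_dom x).
Proof.
move=> [h1 [h2 h3]] d0; split=> //; split.
- by move=> k _; apply: h1.
- by move=> k _; apply: h2.
Qed.

Lemma sgood_l (B : bquiver) (x : walk B) :
  wgood x -> in_dom x 0 ->
  sgood (fun u v => is_true (compat v u)) (fun k => wl x (-k)) (fun k => in_dom x (-k)).
Proof.
move=> [h1 [h2 h3]] d0; split=> //; split.
- move=> k _ a b /=; have e : - k = - (k+1) + 1 by lia.
  by rewrite e in a *; apply: h1.
- move=> k _ a n y /=; apply: h3 => //.
  by rewrite (_ : - k - 1 = - (k+1)); last lia.
Qed.

Lemma Le_trans (B : bquiver) (F : seq (walk B)) a x y z :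
  locally_gentle B -> is_face F -> marked_in F a x -> marked_in F a y ->
  Le x y -> Le y z -> Le x z.
Proof.
move=> hg hF mx my [r1 l1] [r2 l2].
have [gx [dx ex]] := MW_props hF mx.
have [gy [dy ey]] := MW_props hF my.
split.
- apply: (SLe_trans (gentle_r hg) (sgood_r gx dx) (sgood_r gy dy)) => //.
  by rewrite ex ey.
- apply: (SLe_trans (gentle_l hg) (sgood_l gx dx) (sgood_l gy dy)) => //=.
  by rewrite ex ey.
Qed.

Lemma wl_center_t (B : bquiver) (w : walk B) p l :
  (wl w p).2 = true -> wl (center w p) l = wl w (p + l).
Proof. by move=> h; rewrite wl_center h. Qed.
Lemma wl_center_f (B : bquiver) (w : walk B) p l :
  (wl w p).2 = false -> wl (center w p) l = linv (wl w (p - l)).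
Proof. by move=> h; rewrite wl_center h. Qed.

Definition RTail (B : bquiver) (w : walk B) N P d :=
  0 < P /\ forall l, N <= l -> in_dom w l /\ wl w (l+P) = wl w l /\ (wl w l).2 = d.
Definition LTail (B : bquiver) (w : walk B) N P d :=
  0 < P /\ forall l, l <= N -> in_dom w l /\ wl w (l-P) = wl w l /\ (wl w l).2 = d.

Lemma rtail_of (B : bquiver) (w : walk B) : is_walk w -> whi w = None -> exists N P d, RTail w N P d.
Proof.
move=> [_ [_ [_ [_ [hr _]]]]] e.
have [N [P [[d1 d2] [hP h]]]] := hr e.
exists N, P, (wl w N).2; split=> // l hl; have [u v] := h l hl; split=> //.
split; last by rewrite e.
by move: d1; case: (wlo w) => [i|] /=; lia.
Qed.

Lemma ltail_of (B : bquiver) (w : walk B) : is_walk w -> wlo w = None -> exists N P d, LTail w N P d.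
Proof.
move=> [_ [_ [_ [_ [_ hl]]]]] e.
have [N [P [[d1 d2] [hP h]]]] := hl e.
exists N, P, (wl w N).2; split=> // l hl'; have [u v] := h l hl'; split=> //.
split; first by rewrite e.
by move: d2; case: (whi w) => [j|] /=; lia.
Qed.

Lemma RT_step (B : bquiver) (w : walk B) N P d q :
  RTail w N P d -> N + P <= q -> Le (center w q) (center w (q - P)).
Proof.
move=> [hP h] hq.
have [_ [eqp dp]] := h (q - P) ltac:(lia).
rewrite Z.sub_add in eqp.
have [_ [_ dq]] := h q ltac:(lia).
case: d h dp dq => h dp dq.
- split.
  + apply: SLe_refl => k hk; rewrite !wl_center_t //.
    have [_ [e _]] := h (q - P + k) ltac:(lia).
    by rewrite -e; f_equal; lia.
  + apply: (SLe_tail (P := P) (K := q - N)) => //; first lia.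
    * move=> k hk; rewrite !wl_center_t //; f_equal; lia.
    * move=> k hk; rewrite wl_center_t //.
      by have [_ [_ ->]] := h (q + - k) ltac:(lia).
- split.
  + apply: (SLe_tail (P := P) (K := q - N)) => //; first lia.
    * move=> k hk; rewrite !wl_center_f //; f_equal; f_equal; lia.
    * move=> k hk; rewrite wl_center_f //=.
      by have [_ [_ ->]] := h (q - k) ltac:(lia).
  + apply: SLe_refl => k hk; rewrite !wl_center_f //.
    have [_ [e _]] := h (q - P - - k) ltac:(lia).
    by rewrite -e; f_equal; f_equal; lia.
Qed.

Lemma LT_step (B : bquiver) (w : walk B) N P d q :
  LTail w N P d -> q + P <= N -> Le (center w q) (center w (q + P)).
Proof.
move=> [hP h] hq.
have [_ [eqp dp]] := h (q + P) ltac:(lia).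
rewrite Z.add_simpl_r in eqp.
have [_ [_ dq]] := h q ltac:(lia).
case: d h dp dq => h dp dq.
- split.
  + apply: (SLe_tail (P := P) (K := N - q)) => //; first lia.
    * move=> k hk; rewrite !wl_center_t //; f_equal; lia.
    * move=> k hk; rewrite wl_center_t //.
      by have [_ [_ ->]] := h (q + k) ltac:(lia).
  + apply: SLe_refl => k hk; rewrite !wl_center_t //.
    have [_ [e _]] := h (q + P + - k) ltac:(lia).
    by rewrite -e; f_equal; lia.
- split.
  + apply: SLe_refl => k hk; rewrite !wl_center_f //.
    have [_ [e _]] := h (q + P - k) ltac:(lia).
    by rewrite -e; f_equal; f_equal; lia.
  + apply: (SLe_tail (P := P) (K := N - q)) => //; first lia.
    * move=> k hk; rewrite !wl_center_f //; f_equal; f_equal; lia.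
    * move=> k hk; rewrite wl_center_f //=.
      by have [_ [_ ->]] := h (q - - k) ltac:(lia).
Qed.

Lemma mk_marked (B : bquiver) (F : seq (walk B)) a w q :
  List.In w F -> in_dom w q -> (wl w q).1 = a -> marked_in F a (center w q).
Proof. by move=> h1 h2 h3; exists w, q. Qed.

Lemma RT_iter (B : bquiver) (F : seq (walk B)) a w N P d :
  locally_gentle B -> is_face F -> List.In w F -> RTail w N P d ->
  forall q, N <= q -> in_dom w q -> (wl w q).1 = a ->
  exists p, N <= p < N + P /\ (wl w p).1 = a /\ Le (center w q) (center w p).
Proof.
move=> hg hF hw ht q hq dq aq.
have [hP h] := ht.
suff H : forall n : nat, forall q, N <= q <= N + Z.of_nat n -> in_dom w q -> (wl w q).1 = a ->
  exists p, N <= p < N + P /\ (wl w p).1 = a /\ Le (center w q) (center w p).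
  by apply: (H (Z.to_nat (q - N))) => //; lia.
elim=> [|n IH] q' hq' dq' aq'.
  by exists q'; split; [lia|split=> //; apply: Le_refl].
case: (Z_lt_ge_dec q' (N + P)) => [lt|ge].
  by exists q'; split; [lia|split=> //; apply: Le_refl].
have [d1 [e1 _]] := h (q' - P) ltac:(lia).
rewrite Z.sub_add in e1.
have a1 : (wl w (q' - P)).1 = a by rewrite -e1.
have [p [hp [ap lp]]] := IH (q' - P) ltac:(lia) d1 a1.
exists p; split=> //; split=> //.
apply: (Le_trans hg hF (mk_marked hw dq' aq') (mk_marked hw d1 a1)) => //.
by apply: (RT_step ht); lia.
Qed.

Lemma LT_iter (B : bquiver) (F : seq (walk B)) a w N P d :
  locally_gentle B -> is_face F -> List.In w F -> LTail w N P d ->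
  forall q, q <= N -> in_dom w q -> (wl w q).1 = a ->
  exists p, N - P < p <= N /\ (wl w p).1 = a /\ Le (center w q) (center w p).
Proof.
move=> hg hF hw ht q hq dq aq.
have [hP h] := ht.
suff H : forall n : nat, forall q, N - Z.of_nat n <= q <= N -> in_dom w q -> (wl w q).1 = a ->
  exists p, N - P < p <= N /\ (wl w p).1 = a /\ Le (center w q) (center w p).
  by apply: (H (Z.to_nat (N - q))) => //; lia.
elim=> [|n IH] q' hq' dq' aq'.
  by exists q'; split; [lia|split=> //; apply: Le_refl].
case: (Z_lt_ge_dec (N - P) q') => [lt|ge].
  by exists q'; split; [lia|split=> //; apply: Le_refl].
have [d1 [e1 _]] := h (q' + P) ltac:(lia).
rewrite Z.add_simpl_r in e1.
have a1 : (wl w (q' + P)).1 = a by rewrite -e1.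
have [p [hp [ap lp]]] := IH (q' + P) ltac:(lia) d1 a1.
exists p; split=> //; split=> //.
apply: (Le_trans hg hF (mk_marked hw dq' aq') (mk_marked hw d1 a1)) => //.
by apply: (LT_step ht); lia.
Qed.

Lemma LTail_mono (B : bquiver) (w : walk B) N N' P d :
  LTail w N P d -> N' <= N -> LTail w N' P d.
Proof. by move=> [hP h] hN; split=> // l hl; apply: h; lia. Qed.

Lemma window (B : bquiver) (F : seq (walk B)) a w :
  locally_gentle B -> is_face F -> List.In w F ->
  exists lo hi, (forall p, lo <= p < hi -> in_dom w p) /\
   forall q, in_dom w q -> (wl w q).1 = a ->
   exists p, lo <= p < hi /\ (wl w p).1 = a /\ Le (center w q) (center w p).
Proof.
move=> hg hF hw.
have iw : is_walk w by apply: (proj1 hF).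
have idom : forall l, in_dom w l <-> lbd (wlo w) l /\ ubd (whi w) l by [].
destruct (wlo w) as [i|] eqn:El; destruct (whi w) as [j|] eqn:Eh.
- exists (i+1), j; split.
    by move=> p hp; apply/idom; simpl; lia.
  move=> q dq aq; exists q; split; first by move/idom: dq => /= ; lia.
  by split=> //; apply: Le_refl.
- have [N [P [d ht]]] := rtail_of iw Eh.
  have [dN _] := proj2 ht N (Z.le_refl _).
  move/idom: dN => /= [iN _].
  have hP := proj1 ht.
  exists (i+1), (N+P); split.
    by move=> p hp; apply/idom; simpl; lia.
  move=> q dq aq.
  case: (Z_lt_ge_dec q N) => [lt|ge].
    exists q; split; first by move/idom: dq => /= ; lia.
    by split=> //; apply: Le_refl.
  have [p [hp [ap lp]]] := RT_iter hg hF hw ht (Z.ge_le _ _ ge) dq aq.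
  by exists p; split; [lia|split].
- have [N [P [d ht]]] := ltail_of iw El.
  have [dN _] := proj2 ht N (Z.le_refl _).
  move/idom: dN => /= [_ jN].
  have hP := proj1 ht.
  exists (N - P + 1), j; split.
    by move=> p hp; apply/idom; simpl; lia.
  move=> q dq aq.
  case: (Z_lt_ge_dec N q) => [lt|ge].
    exists q; split; first by move/idom: dq => /= ; lia.
    by split=> //; apply: Le_refl.
  have [p [hp [ap lp]]] := LT_iter hg hF hw ht (Z.ge_le _ _ ge) dq aq.
  by exists p; split; [lia|split].
- have [N [P [d ht]]] := rtail_of iw Eh.
  have [N1 [P' [d' ht1]]] := ltail_of iw El.
  set N' := Z.min N1 (N - 1).
  have ht' : LTail w N' P' d' by apply: (LTail_mono ht1); lia.
  have hP := proj1 ht; have hP' := proj1 ht'.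
  exists (N' - P' + 1), (N + P); split.
    by move=> p hp; apply/idom.
  move=> q dq aq.
  case: (Z_lt_ge_dec q N) => [lt|ge]; last first.
    have [p [hp [ap lp]]] := RT_iter hg hF hw ht (Z.ge_le _ _ ge) dq aq.
    by exists p; split; [lia|split].
  case: (Z_lt_ge_dec N' q) => [lt'|ge'].
    exists q; split; first lia.
    by split=> //; apply: Le_refl.
  have [p [hp [ap lp]]] := LT_iter hg hF hw ht' (Z.ge_le _ _ ge') dq aq.
  by exists p; split; [lia|split].
Qed.

Lemma dom_list (B : bquiver) (F : seq (walk B)) a :
  locally_gentle B -> is_face F -> forall G : seq (walk B), (forall w, List.In w G -> List.In w F) ->
  exists S : seq (walk B), (forall s, List.In s S -> marked_in F a s) /\
   forall w q, List.In w G -> in_dom w q -> (wl w q).1 = a -> exists s, List.In s S /\ Le (center w q) s.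
Proof.
move=> hg hF; elim=> [|w G IH] hG.
  by exists nil; split=> // w q [].
have [S [hS1 hS2]] := IH (fun w' h => hG w' (or_intror h)).
have hw : List.In w F by apply: hG; left.
have [lo [hi [hd hdom]]] := window a hg hF hw.
set Sw := List.map (center w) (List.filter (fun p => (wl w p).1 == a)
   (List.map (fun k => lo + Z.of_nat k) (List.seq 0 (Z.to_nat (hi - lo))))).
exists (Sw ++ S); split.
- move=> s hs0; case: (List.in_app_or _ _ _ hs0) => hs; last by apply: hS1.
  have [p [ep hp0]] := proj1 (List.in_map_iff _ _ _) hs; subst s.
  have [hp /eqP ap] := proj1 (List.filter_In _ _ _) hp0.
  have [k [ek hk0]] := proj1 (List.in_map_iff _ _ _) hp.
  have hk := proj1 (List.in_seq _ _ _) hk0.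
  apply: mk_marked => //; apply: hd; lia.
- move=> w' q [ew|hw'] dq aq; last first.
    have [s [hs ls]] := hS2 w' q hw' dq aq.
    by exists s; split=> //; apply: List.in_or_app; right.
  subst w'.
  have [p [hp [ap lp]]] := hdom q dq aq.
  exists (center w p); split=> //; apply: List.in_or_app; left.
  apply: (List.in_map (center w)); apply/List.filter_In; split; last by apply/eqP.
  apply/List.in_map_iff; exists (Z.to_nat (p - lo)); split; first lia.
  apply/List.in_seq; lia.
Qed.

Lemma list_max (B : bquiver) (F : seq (walk B)) a :
  locally_gentle B -> is_face F -> forall S : seq (walk B),
  (forall s, List.In s S -> marked_in F a s) -> S <> nil ->
  exists m, List.In m S /\ forall s, List.In s S -> ~ (Le m s /\ ~ Le s m).
Proof.
move=> hg hF; elim=> [|s0 S IH] hS hne //.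
case: S IH hS hne => [|s1 S] IH hS hne.
  exists s0; split; first by left.
  by move=> s [<-|[]] [_ h]; apply: h; apply: Le_refl.
have [m [hm hmax]] := IH (fun s h => hS s (or_intror h)) ltac:(discriminate).
have ms0 := hS s0 (or_introl erefl).
have mm := hS m (or_intror hm).
case: (classic (Le m s0 /\ ~ Le s0 m)) => [[l1 l2]|nl].
- exists s0; split; first by left.
  move=> s [<-|hs] [l3 l4]; first by apply: l4.
  apply: (hmax s hs); split.
    by apply: (Le_trans hg hF mm ms0).
  move=> l5; apply: l4; apply: (Le_trans hg hF (hS s (or_intror hs)) mm) => //.
- exists m; split; first by right.
  by move=> s [<-|hs] //; apply: hmax.
Qed.

Theorem lemma5p7 (Q Qbl : bquiver) (iv : vert Q -> vert Qbl) (ia : arr Q -> arr Qbl)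
    (F : seq (walk Qbl)) (a : arr Qbl) :
  locally_gentle Q -> is_blossoming iv ia -> is_face F ->
  (forall m, ~ marked_in F a m) \/
  (exists m, marked_in F a m /\ forall x, marked_in F a x -> ~ countercurrent m x).
Proof.
move=> _ hb hF.
have hg : locally_gentle Qbl by case: hb => [_ [_ [_ [_ [_ [_ [_ [_ h]]]]]]]].
case: (classic (exists m, marked_in F a m)) => [[x0 hx0]|nm]; last first.
  by left=> m hm; apply: nm; exists m.
right.
have [S [hS1 hS2]] := dom_list a hg hF (fun w h => h).
have dom : forall x, marked_in F a x -> exists s, List.In s S /\ Le x s.
  by move=> x [w [q [hw [dq [aq ->]]]]]; apply: hS2.
have [s0 [hs0 _]] := dom x0 hx0.
have hne : S <> nil by move=> e; rewrite e in hs0.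
have [m [hm hmax]] := list_max hg hF hS1 hne.
exists m; split; first by apply: hS1.
move=> x hx cc.
have l1 := cc_Le cc; have l2 := cc_notLe cc.
have [s [hs ls]] := dom x hx.
apply: (hmax s hs); split.
  by apply: (Le_trans hg hF (hS1 m hm) hx).
move=> l3; apply: l2; apply: (Le_trans hg hF hx (hS1 s hs)) => //.
Qed.
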